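(* Let $H$ be a separable infinite-dimensional complex Hilbert space, $T\in\mathcal{L}(H)$ and $\lambda\in\partial\sigma(T;H)$ (the boundary of the spectrum). Then $T-\lambda I$ is not universal. In particular, if $\sigma(T;H)=\partial\sigma(T;H)$, then $T-\lambda I$ is not universal for any $\lambda\in\mathbb{C}$.
   Context: $\mathcal{L}(H)$ denotes the bounded linear operators on $H$. Operators $T_1\in\mathcal{L}(H_1)$, $T_2\in\mathcal{L}(H_2)$ are similar if there is a linear isomorphism $J:H_1\to H_2$ with $T_1=J^{-1}T_2J$. An operator $U\in\mathcal{L}(H)$ is universal if for every $T\in\mathcal{L}(H)$ there exist a closed subspace $M\subset H$ with $U(M)\subset M$ and a constant $c\neq0$ such that $U|_M:M\to M$ and $cT:H\to H$ are similar. *)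

(* Defs.v *)
From mathcomp Require Import all_boot all_order all_algebra.
From mathcomp Require Import all_classical all_reals all_analysis.
From mathcomp Require Import complex.

Set Implicit Arguments.
Unset Strict Implicit.
Unset Printing Implicit Defensive.

Import Order.TTheory GRing.Theory Num.Theory.
Import numFieldNormedType.Exports.
Local Open Scope ring_scope.
Local Open Scope classical_set_scope.

(* The field of complex numbers, seen as a numClosedFieldType (so that it
   carries its canonical normed/topological structure, norm = modulus). *)
Definition Cplx (R : realType) : numClosedFieldType := R[i].

Section Hilbert.
Variables (R : realType) (H : completeNormedModType (Cplx R)).

(* ip is an inner product (linear in the 1st argument, conjugate symmetric)
   inducing the norm of H:  |x|^2 = <x,x>.  Together with completeness of H
   this says that H is a complex Hilbert space. *)
Definition is_inner_product (ip : H -> H -> Cplx R) : Prop :=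
  (forall (a : Cplx R) (x y z : H), ip (a *: x + y) z = a * ip x z + ip y z) /\
  (forall x y : H, ip y x = (ip x y)^*) /\
  (forall x : H, `|x| ^+ 2 = ip x x).

Definition separable_space : Prop :=
  exists D : set H, countable D /\ dense D.

Definition infinite_dimensional : Prop :=
  forall n : nat, exists v : 'I_n -> H,
    forall c : 'I_n -> Cplx R,
      \sum_(i < n) c i *: v i = 0 -> forall i, c i = 0.

Definition is_linear_map (f : H -> H) : Prop :=
  (forall x y, f (x + y) = f x + f y) /\ (forall (a : Cplx R) x, f (a *: x) = a *: f x).

Definition bounded_op (T : H -> H) : Prop := is_linear_map T /\ continuous T.

Definition shift_op (T : H -> H) (lam : Cplx R) : H -> H := fun x => T x - lam *: x.

Definition spectrum (T : H -> H) : set (Cplx R) :=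
  [set lam | ~ exists S : H -> H, bounded_op S /\
       (forall x, S (shift_op T lam x) = x) /\ (forall y, shift_op T lam (S y) = y)].

Definition closed_subspace (M : set H) : Prop :=
  closed M /\ M 0 /\ (forall x y, M x -> M y -> M (x + y)) /\
  (forall (a : Cplx R) x, M x -> M (a *: x)).

(* J is represented by a function H -> H of which only the values on M matter. *)
Definition similar_restr (U : H -> H) (M : set H) (V : H -> H) : Prop :=
  exists J K : H -> H,
    (forall x y, M x -> M y -> J (x + y) = J x + J y) /\
    (forall (a : Cplx R) x, M x -> J (a *: x) = a *: J x) /\
    {within M, continuous J} /\
    bounded_op K /\ (forall y, M (K y)) /\
    (forall x, M x -> K (J x) = x) /\ (forall y, J (K y) = y) /\
    (forall x, M x -> U x = K (V (J x))).

Definition universal (U : H -> H) : Prop :=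
  forall T : H -> H, bounded_op T ->
    exists (M : set H) (c : Cplx R),
      closed_subspace M /\ (forall x, M x -> M (U x)) /\ c != 0 /\
      similar_restr U M (fun x => c *: T x).

End Hilbert.

Definition boundary (R : realType) (S : set (Cplx R)) : set (Cplx R) :=
  closure S `\` interior S.

(* Main.v *)
Require Import Defs.
From mathcomp Require Import all_boot all_order all_algebra.
From mathcomp Require Import all_classical all_reals all_analysis.
From mathcomp Require Import complex.
From mathcomp Require Import ring lra.
Set Implicit Arguments.
Unset Strict Implicit.
Unset Printing Implicit Defensive.
Import Order.TTheory GRing.Theory Num.Theory.
Import numFieldNormedType.Exports.
Local Open Scope ring_scope.
Local Open Scope classical_set_scope.

Section Aux.
Variables (R : realType) (H : completeNormedModType (Cplx R)).
Local Notation K := (Cplx R).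

Lemma bound_of_small (f : H -> H) (M : set H) :
  (forall (a : K) x, M x -> M (a *: x)) ->
  (forall (a : K) x, M x -> f (a *: x) = a *: f x) ->
  (exists2 d : K, 0 < d & forall x, M x -> `|x| < d -> `|f x| < 1) ->
  exists2 C : K, 0 < C & forall x, M x -> `|f x| <= C * `|x|.
Proof.
move=> MZ fZ [d d0 hd].
exists (2 / d); first by rewrite divr_gt0.
move=> x Mx.
have f0 : f 0 = 0 by have := fZ 0 x Mx; rewrite !scale0r.
have [->|x0] := eqVneq x 0.
  by rewrite f0 !normr0 mulr0.
have nx0 : 0 < `|x| by rewrite normr_gt0.
set s : K := d / (2 * `|x|).
have s0 : 0 < s by rewrite divr_gt0 // mulr_gt0.
have := hd (s *: x) (MZ _ _ Mx).
rewrite fZ // (normrZ s x) (normrZ s (f x)) (gtr0_norm s0).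
have -> : s * `|x| = d / 2.
  rewrite /s invfM -!mulrA mulVf ?mulr1 //; last by rewrite gt_eqF.
move=> h.
have : s * `|f x| < 1.
  by apply: h; rewrite ltr_pdivrMr // ltr_pMr // (ltr_nat _ 1 2).
have -> : 2 / d * `|x| = s^-1.
  by rewrite /s invfM invrK; ring.
move=> h1; apply: ltW.
rewrite -[`|f x|]mul1r -(mulVf (lt0r_neq0 s0)) -mulrA -[X in _ < X]mulr1.
by rewrite ltr_pM2l ?invr_gt0.
Qed.


Lemma bop_bound (f : H -> H) : bounded_op f ->
  exists2 C : K, 0 < C & forall x, `|f x| <= C * `|x|.
Proof.
move=> [[fD fZ] cf].
have f0 : f 0 = 0 by have := fZ 0 0; rewrite !scale0r.
have [C C0 hC] : exists2 C : K, 0 < C & forall x, setT x -> `|f x| <= C * `|x|.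
  apply: (@bound_of_small f setT) => //.
  have := cvgr_dist_lt _ _ (cf 0) 1 ltr01.
  rewrite f0 => /(_ (nbhs_filter _)) /nbhs_normP [e e0 he].
  exists e => // x _ xe; have /= := he x; rewrite sub0r normrN.
  by move=> /(_ xe); rewrite sub0r normrN.
by exists C => // x; apply: hC.
Qed.

Lemma within_bound (f : H -> H) (M : set H) : M 0 ->
  (forall (a : K) x, M x -> M (a *: x)) ->
  (forall (a : K) x, M x -> f (a *: x) = a *: f x) ->
  {within M, continuous f} ->
  exists2 C : K, 0 < C & forall x, M x -> `|f x| <= C * `|x|.
Proof.
move=> M0 MZ fZ cf.
have f0 : f 0 = 0 by have := fZ 0 0 M0; rewrite !scale0r.
apply: bound_of_small => //.
have := cvgr_dist_lt _ _ ((subspace_continuousP _ _).1 cf 0 M0) 1 ltr01.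
rewrite /from_subspace f0 => /(_ (within_filter _ (nbhs_filter _))) /nbhs_normP [e e0 he].
exists e => // x Mx xe; have /= := he x; rewrite sub0r normrN.
by move=> /(_ xe Mx); rewrite sub0r normrN.
Qed.

End Aux.

Section IP.
Variables (R : realType) (H : completeNormedModType (Cplx R)).
Local Notation K := (Cplx R).
Variable ip : H -> H -> K.
Hypothesis hip : is_inner_product ip.

Lemma ipDZl a x y z : ip (a *: x + y) z = a * ip x z + ip y z.
Proof. by case: hip. Qed.
Lemma ipC x y : ip y x = (ip x y)^*.
Proof. by case: hip => _ []. Qed.
Lemma ipN2 x : `|x| ^+ 2 = ip x x.
Proof. by case: hip => _ []. Qed.

Lemma ip0l z : ip 0 z = 0.
Proof.
have := ipDZl 1 0 0 z; rewrite scale1r !addr0 mul1r => /eqP.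
by rewrite eq_sym -subr_eq0 addrK => /eqP.
Qed.
Lemma ipDl x y z : ip (x + y) z = ip x z + ip y z.
Proof. by rewrite -{1}(scale1r x) ipDZl mul1r. Qed.
Lemma ipZl a x z : ip (a *: x) z = a * ip x z.
Proof. by rewrite -(addr0 (a *: x)) ipDZl ip0l addr0. Qed.
Lemma ipNl x z : ip (- x) z = - ip x z.
Proof. by rewrite -scaleN1r ipZl mulN1r. Qed.
Lemma ipBl x y z : ip (x - y) z = ip x z - ip y z.
Proof. by rewrite ipDl ipNl. Qed.
Lemma ipDr x y z : ip z (x + y) = ip z x + ip z y.
Proof. by rewrite ipC ipDl rmorphD /= -!ipC. Qed.
Lemma ipZr a x z : ip z (a *: x) = a^* * ip z x.
Proof. by rewrite ipC ipZl rmorphM /= -ipC. Qed.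
Lemma ipNr x z : ip z (- x) = - ip z x.
Proof. by rewrite ipC ipNl rmorphN /= -ipC. Qed.
Lemma ipBr x y z : ip z (x - y) = ip z x - ip z y.
Proof. by rewrite ipDr ipNr. Qed.
Lemma ip0r z : ip z 0 = 0.
Proof. by rewrite ipC ip0l conjC0. Qed.

Local Notation "x %:C" := (@real_complex_def R (Phant R) x).
Lemma rcD (x y : R) : (x + y)%:C = x%:C + y%:C. Proof. exact: rmorphD. Qed.
Lemma rcB (x y : R) : (x - y)%:C = x%:C - y%:C. Proof. exact: rmorphB. Qed.
Lemma rcM (x y : R) : (x * y)%:C = x%:C * y%:C. Proof. exact: rmorphM. Qed.
Lemma rcN (x : R) : (- x)%:C = - x%:C. Proof. exact: rmorphN. Qed.
Lemma rcX (x : R) n : (x ^+ n)%:C = x%:C ^+ n. Proof. exact: rmorphXn. Qed.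
Lemma rcn n : (n%:R : R)%:C = n%:R. Proof. exact: rmorph_nat. Qed.
Lemma rc1 : (1 : R)%:C = 1. Proof. exact: rmorph1. Qed.
Lemma rc0 : (0 : R)%:C = 0. Proof. exact: rmorph0. Qed.
Lemma rcV (x : R) : (x^-1)%:C = x%:C^-1. Proof. exact: fmorphV. Qed.

Definition dn (v : H) : R := complex.Re (`|v| : K).

Lemma normE v : `|v| = (dn v)%:C.
Proof. by rewrite /dn RRe_real // normr_real. Qed.

Lemma dn_ge0 v : 0 <= dn v.
Proof. by rewrite -ler0c -normE. Qed.

Lemma dnD u v : dn (u + v) <= dn u + dn v.
Proof. by rewrite -lecR rmorphD /= -!normE ler_normD. Qed.

Lemma dnB u v : dn (u - v) = dn (v - u).
Proof. by apply: complexI; rewrite -!normE distrC. Qed.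

Lemma dnZ (a : K) v : dn (a *: v) = complex.Re (`|a| : K) * dn v.
Proof.
apply: complexI; rewrite rmorphM /= -!normE normrZ. by [].
Qed.

Lemma dn_eq0 v : dn v = 0 -> v = 0.
Proof. by move=> h; apply/normr0_eq0; rewrite normE h. Qed.

Lemma dn2 v : ((dn v) ^+ 2)%:C = ip v v.
Proof. by rewrite rmorphXn /= -normE ipN2. Qed.

Lemma dn2D u v : ((dn (u + v)) ^+ 2)%:C = ((dn u)^+2)%:C + ((dn v)^+2)%:C + ip u v + ip v u.
Proof. rewrite (dn2 (u + v)) (dn2 u) (dn2 v) ipDl !ipDr; ring. Qed.

Lemma parallelogram a b :
  (dn (a - b)) ^+ 2 + (dn (a + b)) ^+ 2 = 2 * (dn a) ^+ 2 + 2 * (dn b) ^+ 2.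
Proof.
apply: complexI; rewrite !rcD (dn2 (a - b)) (dn2 (a + b)) (rcM 2) (rcM 2) (dn2 a) (dn2 b) (rcn 2) !ipDl !ipNl !ipDr !ipNr; ring.
Qed.


Lemma inv_small (e : R) : 0 < e -> \forall n \near \oo, (n.+1%:R : R)^-1 < e.
Proof. by move=> e0; exact: (near_infty_natSinv_lt (PosNum e0)). Qed.

Lemma real_pos (e : K) : 0 < e -> e = (complex.Re e)%:C /\ 0 < complex.Re e.
Proof.
move=> e0; have er : e \is Num.real by rewrite realE ltW.
by rewrite RRe_real //; split => //; rewrite -ltcR RRe_real.
Qed.

Lemma key_ineq (A B D s b : R) : D <= A - 2 * s * b + s ^+ 2 * b * B -> A <= D ->
  s * (B + 1) = 1 -> 0 < s -> 0 <= b -> b <= 0.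
Proof.
move=> hq hz sE s0 bb0.
have h1 : s * b * (s * B - 2) >= 0 by nra.
have h2 : s * B - 2 < -1 by nra.
have h3 : s * b <= 0.
  have sb0 : 0 <= s * b by apply: mulr_ge0 => //; exact: ltW.
  nra.
by move: h3; rewrite pmulr_rle0.
Qed.

Lemma proj_exists (M : set H) : closed_subspace M ->
  forall x, exists p, M p /\ forall m, M m -> ip (x - p) m = 0.
Proof.
move=> [clM [M0 [MD MZ]]] x.
have MB u v : M u -> M v -> M (u - v).
  by move=> Mu Mv; apply: MD => //; rewrite -scaleN1r; apply: MZ.
pose S := [set r : R | exists2 m, M m & r = (dn (x - m))^+2].
have S0 : S (dn x ^+ 2) by exists 0 => //; rewrite subr0.
have lbS : has_lbound S by exists 0 => r [m _ ->]; exact: sqr_ge0.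
set D := inf S.
have hD m : M m -> D <= dn (x - m) ^+ 2 by move=> Mm; apply: ge_inf => //; exists m.
have D0 : 0 <= D by apply: lb_le_inf; [exists (dn x ^+ 2) | move=> r [m _ ->]; exact: sqr_ge0].
have seq n : exists m, M m /\ dn (x - m) ^+ 2 < D + (n.+1%:R)^-1.
  have [r [m Mm ->] hr] := @inf_adherent _ S (n.+1%:R^-1) (ltac:(by rewrite invr_gt0 ltr0n)) (conj (ex_intro _ _ S0) lbS).
  by exists m.
have [mm hmm] := choice seq.
have two0 : (2 : K) != 0 by rewrite pnatr_eq0.
have cb n k : dn (mm n - mm k) ^+ 2 <= 2 * (n.+1%:R)^-1 + 2 * (k.+1%:R)^-1.
  have [Mn hn] := hmm n; have [Mk hk] := hmm k.
  pose w := (2 : K)^-1 *: (mm n + mm k).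
  have Mw : M w by apply: MZ; apply: MD.
  have := parallelogram (x - mm n) (x - mm k).
  have -> : x - mm n - (x - mm k) = mm k - mm n.
    by rewrite opprB addrC addrA subrK.
  have -> : x - mm n + (x - mm k) = (2 : K) *: (x - w).
    rewrite scalerBr /w scalerA mulfV // scale1r scaler_nat.
    by rewrite mulr2n opprD !addrA; congr (_ - _); rewrite -!addrA; congr (_ + _); rewrite addrC.
  rewrite dnZ (dnB (mm k)).
  have -> : complex.Re (`|2 : K|) = 2.
    by rewrite normr_nat.
  have := hD _ Mw.
  have i1 : 0 <= (n.+1%:R : R)^-1 by rewrite invr_ge0 ler0n.
  have i2 : 0 <= (k.+1%:R : R)^-1 by rewrite invr_ge0 ler0n.
  move=> h1; rewrite exprMn (_ : (2:R) ^+ 2 = 4); last by rewrite -natrX.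
  move=> h2; move: hn hk h1 h2 i1 i2.
  move: (dn (mm n - mm k) ^+ 2) (dn (x - w) ^+ 2) (dn (x - mm n) ^+ 2) (dn (x - mm k) ^+ 2) (n.+1%:R^-1 : R) (k.+1%:R^-1 : R) => a b c d u v; lra.
have hc : cauchy (mm @ \oo).
  apply: cauchy_exP => eps eps0.
  have [epsE e0] := real_pos eps0.
  set ep := complex.Re eps in epsE e0.
  have e2 : 0 < ep ^+ 2 / 4 by rewrite divr_gt0 // exprn_gt0.
  have hN := inv_small e2.
  have [N hN'] := filter_ex hN.
  exists (mm N); apply: filterS hN => n hn.
  rewrite -ball_normE /= normE epsE ltcR.
  have := cb N n; have := dn_ge0 (mm N - mm n).
  move: hn hN' e0; move: (dn (mm N - mm n)) (N.+1%:R^-1 : R) (n.+1%:R^-1 : R) => a u v.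
  nra.
have cv := cauchy_cvg _ hc.
set p := lim (mm @ \oo) in cv.
have {}cv : mm @ \oo --> p by apply: cv; apply: fmap_proper_filter.
have Mp : M p.
  apply: (closed_cvg _ clM _ _ cv).
  by apply: filterE => n; case: (hmm n).
have hp : dn (x - p) ^+ 2 <= D.
  apply/ler_addgt0Pr => e e0.
  pose ep := e / (2 * (2 * D + 5)).
  have ep0 : 0 < ep by rewrite divr_gt0 // mulr_gt0 //; lra.
  have epE : ep * (2 * D + 5) * 2 = e.
    rewrite /ep; field; lra.
  have c1 := cvgr_dist_lt _ _ cv 1 ltr01.
  have ep0' : 0 < ep%:C by rewrite ltcR.
  have c2 := cvgr_dist_lt _ _ cv (ep%:C) ep0'.
  have e20 : 0 < e / 2 by rewrite divr_gt0.
  have c3 := inv_small e20.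
  have [n [[h3 h1] h2]] := filter_ex (filterI (filterI c3 (c1 eventually_filter)) (c2 eventually_filter)).
  rewrite normE ltcR in h2; rewrite normE -rc1 ltcR in h1.
  have [_ hn] := hmm n.
  have tri : dn (x - p) <= dn (x - mm n) + dn (p - mm n).
    by rewrite (dnB p); have := dnD (x - mm n) (mm n - p); rewrite addrA subrK.
  have u1 : n.+1%:R^-1 <= (1 : R) by rewrite invf_le1 // ler1n.
  have a0 := dn_ge0 (x - p); have b0 := dn_ge0 (x - mm n); have c0 := dn_ge0 (p - mm n).
  clear c2 ep0'; move: tri hn h1 h2 h3 u1 a0 b0 c0 epE ep0 D0 e0.
  move: (dn (x - p)) (dn (x - mm n)) (dn (p - mm n)) (n.+1%:R^-1 : R) ep => a b c u q.
  move=> tri hn h1 h2 h3 u1 a0 b0 c0 epE ep0 D0 e0.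
  have ab : a ^+ 2 <= (b + c) ^+ 2 by nra.
  have bD : b <= D + 2 by nra.
  have cq : c * (2 * b + 1) <= q * (2 * D + 5) by nra.
  nra.
exists p; split => // m Mm.
set z := x - p; set be := ip z m.
pose s : R := ((dn m) ^+ 2 + 1)^-1.
have s0 : 0 < s by rewrite invr_gt0; have := sqr_ge0 (dn m); lra.
have sE : s * ((dn m) ^+ 2 + 1) = 1 by rewrite mulVf //; have := sqr_ge0 (dn m); lra.
pose t : K := s%:C * be.
have Mq : M (p + t *: m) by apply: MD => //; apply: MZ.
have hq := hD _ Mq.
rewrite (_ : x - (p + t *: m) = z - t *: m) in hq; last by rewrite opprD addrA.
pose bb : R := (complex.Re (`|be| : K)) ^+ 2.
have bbE : bb%:C = be * be^*.
  by rewrite rcX RRe_real ?normr_real // normCK.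
have bb0 : 0 <= bb by exact: sqr_ge0.
have sc : s%:C^* = s%:C by rewrite conj_Creal // ger0_real // ler0c ltW.
have E : (dn (z - t *: m)) ^+ 2 = (dn z) ^+ 2 - 2 * s * bb + s ^+ 2 * bb * (dn m) ^+ 2.
  apply: complexI.
  rewrite (dn2 (z - t *: m)) rcD rcB (dn2 z) (rcM (2 * s) bb) (rcM 2 s).
  rewrite (rcM (s ^+ 2 * bb) (dn m ^+ 2)) (rcM (s ^+ 2) bb) (rcX s 2) (dn2 m) bbE (rcn 2).
  rewrite !ipBl !ipBr !ipZl !ipZr (ipC x m) (ipC p m).
  have tc : t^* = s%:C * ((ip x m)^* - (ip p m)^*).
    by rewrite /t rmorphM /= sc /be /z ipBl rmorphB.
  rewrite tc /t /be /z ipBl rmorphB /=; ring.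
have hz : (dn z) ^+ 2 <= D by [].
rewrite E in hq.
have : bb <= 0.
  exact: key_ineq hq hz sE s0 bb0.
move=> bble; have bbz : bb = 0 by apply/eqP; rewrite eq_le bble bb0.
apply/eqP; rewrite -normr_eq0 -[X in X == _]RRe_real ?normr_real //.
by move: bbz; rewrite /bb => /eqP; rewrite sqrf_eq0 => /eqP ->.
Qed.

Lemma nk_real (a : K) : (complex.Re (`|a| : K))%:C = `|a|.
Proof. by rewrite RRe_real // normr_real. Qed.

Definition nk (a : K) : R := complex.Re (`|a| : K).

Lemma nkE (a : K) : `|a| = (nk a)%:C.
Proof. by rewrite nk_real. Qed.

Lemma nk_ge0 a : 0 <= nk a.
Proof. by rewrite -ler0c -nkE. Qed.

Lemma nkM a b : nk (a * b) = nk a * nk b.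
Proof. by apply: complexI; rewrite rcM -!nkE normrM. Qed.

Lemma nk_gt0 a : a != 0 -> 0 < nk a.
Proof. by move=> a0; rewrite -ltcR -nkE rc0 normr_gt0. Qed.

Lemma nkB a b : nk (a - b) = nk (b - a).
Proof. by rewrite /nk distrC. Qed.

Lemma dnZ' (a : K) v : dn (a *: v) = nk a * dn v.
Proof. exact: dnZ. Qed.

Lemma bound_dn (f : H -> H) (M : set H) :
  (exists2 C : K, 0 < C & forall x, M x -> `|f x| <= C * `|x|) ->
  exists2 C : R, 0 < C & forall x, M x -> dn (f x) <= C * dn x.
Proof.
move=> [C C0 hC]; have [CE C0'] := real_pos C0.
exists (complex.Re C) => // x Mx; rewrite -lecR rcM -!normE -CE; exact: hC.
Qed.

Lemma bop_dn (f : H -> H) : bounded_op f ->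
  exists2 C : R, 0 < C & forall x, dn (f x) <= C * dn x.
Proof.
move=> /bop_bound [C C0 hC].
have [C' C0' hC'] := @bound_dn f setT (ex_intro2 _ _ C C0 (fun x _ => hC x)).
by exists C' => // x; apply: hC'.
Qed.

Lemma lip_cont (f : H -> H) (C : R) : 0 < C ->
  (forall x y, dn (f x - f y) <= C * dn (x - y)) -> continuous f.
Proof.
move=> C0 hf x; apply/cvgrPdist_lt => eps eps0.
have [epsE e0] := real_pos eps0.
apply: (proj2 (nbhs_normP _ _)); exists ((complex.Re eps / C)%:C); first by rewrite /mkset -rc0 ltcR divr_gt0.
move=> t /=; rewrite normE ltcR epsE normE ltcR => ht.
apply: (le_lt_trans (hf x t)).
by rewrite mulrC -ltr_pdivlMr.
Qed.

Lemma proj_unique (M : set H) x p p' : (forall u v, M u -> M v -> M (u - v)) ->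
  M p -> M p' -> (forall m, M m -> ip (x - p) m = 0) ->
  (forall m, M m -> ip (x - p') m = 0) -> p = p'.
Proof.
move=> MB Mp Mp' h h'.
have Md := MB _ _ Mp Mp'.
have e : ip (p - p') (p - p') = 0.
  have := h' _ Md; have := h _ Md.
  move=> e1 e2.
  have ed : (x - p') - (x - p) = p - p' by rewrite opprB addrC addrA subrK.
  have : ip ((x - p') - (x - p)) (p - p') = 0 by rewrite ipBl e2 e1 subr0.
  by rewrite ed.
apply/eqP; rewrite -subr_eq0; apply/eqP; apply: dn_eq0.
have := dn2 (p - p'); rewrite e => /complexI /eqP; rewrite sqrf_eq0 => /eqP.
by [].
Qed.

Lemma proj_op (M : set H) : closed_subspace M -> exists P : H -> H,
  [/\ (forall x, M (P x)), (forall m, M m -> P m = m),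
      (forall x y, P (x + y) = P x + P y), (forall (a : K) x, P (a *: x) = a *: P x)
    & (forall x, dn (P x) <= dn x)].
Proof.
move=> cM; have [P hP] := choice (proj_exists cM).
have [clM [M0 [MD MZ]]] := cM.
have MB u v : M u -> M v -> M (u - v).
  by move=> Mu Mv; apply: MD => //; rewrite -scaleN1r; apply: MZ.
exists P; split.
- by move=> x; case: (hP x).
- move=> m Mm; have [h1 h2] := hP m.
  by apply: (proj_unique MB h1 Mm h2) => m' _; rewrite subrr ip0l.
- move=> x y; have [h1 h2] := hP (x + y); have [h3 h4] := hP x; have [h5 h6] := hP y.
  apply: (proj_unique MB h1 (MD _ _ h3 h5) h2) => m Mm.
  rewrite (_ : x + y - (P x + P y) = (x - P x) + (y - P y)); last first.
    by rewrite opprD addrACA.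
  by rewrite ipDl h4 // h6 // addr0.
- move=> a x; have [h1 h2] := hP (a *: x); have [h3 h4] := hP x.
  apply: (proj_unique MB h1 (MZ a _ h3) h2) => m Mm.
  by rewrite -scalerBr ipZl h4 // mulr0.
- move=> x; have [h1 h2] := hP x.
  have e := dn2D (P x) (x - P x).
  rewrite (addrC (P x)) subrK h2 // (ipC (x - P x)) h2 // conjC0 !addr0 in e.
  have e' : dn x ^+ 2 = dn (P x) ^+ 2 + dn (x - P x) ^+ 2.
    by apply: complexI; rewrite e rcD.
  have := dn_ge0 (P x); have := dn_ge0 x; have := sqr_ge0 (dn (x - P x)).
  move: e'; move: (dn x) (dn (P x)) (dn (x - P x) ^+ 2) => a b c; nra.
Qed.

Lemma lin_B (f : H -> H) : (forall x y, f (x + y) = f x + f y) ->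
  (forall (a : K) x, f (a *: x) = a *: f x) -> forall x y, f (x - y) = f x - f y.
Proof. by move=> fD fZ x y; rewrite fD -scaleN1r fZ scaleN1r. Qed.

Lemma bop_id : bounded_op (@id H).
Proof.
split; first by split.
by apply: (@lip_cont _ 1) => // x y; rewrite mul1r.
Qed.

Lemma univ_spec (T : H -> H) (lam : K) : infinite_dimensional H -> bounded_op T ->
  universal (shift_op T lam) ->
  exists2 r : K, 0 < r & forall mu, `|lam - mu| < r -> spectrum T mu.
Proof.
move=> hinf bT hU.
have [y0 y00] : exists y0 : H, y0 != 0.
  have [v hv] := hinf 1%N; exists (v ord0); apply/negP => /eqP v0.
  have h1 := hv (fun _ => 1) (ltac:(by rewrite big_ord1 v0 scaler0)) ord0.
  by move/eqP: h1; rewrite oner_eq0.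
have b0 : bounded_op (fun _ : H => 0 : H).
  split; [split => *; [by rewrite addr0 | by rewrite scaler0] | exact: cst_continuous].
have bid := bop_id.
have [M0 [c0 [[clM0 [M00 [M0D M0Z]]] [_ [_ [J0 [K0 [J0D [J0Z [J0c [bK0 [K0M [KJ0 [JK0 UK0]]]]]]]]]]]]]] := hU _ b0.
have [[K0D K0Z] _] := bK0.
have K00 : K0 0 = 0 by have := K0Z 0 0; rewrite !scale0r.
have U0 : forall w, M0 w -> shift_op T lam w = 0.
  by move=> w Mw; rewrite (UK0 w Mw) scaler0 K00.
have J00 : J0 0 = 0 by have := J0Z 0 0 M00; rewrite !scale0r.
have [[z Mz]|allM] : (exists z, ~ M0 z) \/ (forall z, M0 z).
  case: (pselect (exists z, ~ M0 z)) => [h|h]; [by left | right => z].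
  by apply: contrapT => nz; apply: h; exists z.
have [P [PM Pid PD PZ Pb]] := proj_op (conj clM0 (conj M00 (conj M0D M0Z))).
  have PB := lin_B PD PZ.
  pose k := z - P z.
  have k0 : k != 0.
    apply/negP => /eqP; rewrite /k => /eqP; rewrite subr_eq0 => /eqP e.
    by apply: Mz; rewrite e.
  have Pk : P k = 0 by rewrite /k PB (Pid _ (PM z)) subrr.
  pose W x := J0 (P x).
  have WV y : W (K0 y) = y by rewrite /W Pid.
  have Wk : W k = 0 by rewrite /W Pk.
  have WD x y : W (x + y) = W x + W y by rewrite /W PD J0D.
  have WZ a x : W (a *: x) = a *: W x by rewrite /W PZ J0Z.
  have WB := lin_B WD WZ.
  have [CJ0 CJ00 hCJ0] := bound_dn (within_bound M00 M0Z J0Z J0c).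
  have Wb x : dn (W x) <= CJ0 * dn x.
    apply: (le_trans (hCJ0 _ (PM x))); rewrite ler_pM2l //.
  have bW : bounded_op W.
    split; first by split.
    by apply: (lip_cont CJ00) => x y; rewrite -WB.
  have [M [c [[clM [M_0 [MD MZ]]] [_ [c00 [J [Kk [JD [JZ [Jc [bK [KM [KJ [JK UK]]]]]]]]]]]]]] := hU _ bW.
  have [[KD KZ] _] := bK.
  have KB := lin_B KD KZ.
  have K0B := lin_B K0D K0Z.
  have [CV CV0 hCV] := bop_dn bK0.
  have [CK CK0 hCK] := bop_dn bK.
  have [CJ CJ0' hCJ] := bound_dn (within_bound M_0 MZ JZ Jc).
  have nc0 := nk_gt0 c00.
  exists ((nk c / CV)%:C); first by rewrite -rc0 ltcR divr_gt0.
  move=> mu; rewrite nkE ltcR => hmu [S [bS [SL SR]]].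
  have [CS CS0 hCS] := bop_dn bS.
  pose nu := (mu - lam) / c.
  have cnu : c * nu = mu - lam by rewrite mulrC divfK.
  pose q := nk nu * CV.
  have q0 : 0 <= q by rewrite mulr_ge0 // ?nk_ge0 // ltW.
  have q1 : q < 1.
    have : nk c * nk nu = nk (lam - mu) by rewrite -nkM cnu nkB.
    move: hmu; rewrite /q ltr_pdivlMr // => h1 h2.
    rewrite -(ltr_pM2l nc0) mulr1 mulrA h2 (mulrC _ CV).
    by rewrite mulrC.
  pose B := (1 + CV * CJ0) * CJ * CS * nk (c * nu) * CK.
  have B0 : 0 <= B.
    have h1 : 0 <= 1 + CV * CJ0 by rewrite addr_ge0 // mulr_ge0 // ltW.
    have h2 := nk_ge0 (c * nu).
    by rewrite /B; repeat apply: mulr_ge0 => //; exact: ltW.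
  have [n hn] : exists n, B * q ^+ n < 1.
    have hq : `|q| < 1 by rewrite ger0_norm.
    have e0 : 0 < (B + 1)^-1 by rewrite invr_gt0; lra.
    have := cvgr_dist_lt _ _ (cvg_expr hq) _ e0.
    move=> /(_ eventually_filter) /filter_ex [n]; rewrite sub0r normrN ger0_norm ?exprn_ge0 // => h.
    have Bp : 0 < B + 1 by lra.
    exists n; rewrite -(ltr_pM2l Bp) mulfV ?lt0r_neq0 // in h.
    have : 0 <= q ^+ n by exact: exprn_ge0.
    move: h; move: (q ^+ n) => t; nra.
  pose y m := iter m (fun v => k + nu *: K0 v) 0.
  have yS m : y m.+1 = k + nu *: K0 (y m) by [].
  pose d m := y m.+1 - y m.
  have dS m : d m.+1 = nu *: K0 (d m).
    have yD a b : (k + nu *: K0 a) - (k + nu *: K0 b) = nu *: K0 (a - b).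
      by rewrite opprD addrACA subrr add0r -scalerBr -K0B.
    exact: yD.
  have dB m : dn (d m) <= q ^+ m * dn k.
    elim: m => [|m IH]; first by rewrite /d yS /y /= K00 scaler0 addr0 subr0 expr0 mul1r.
    rewrite dS dnZ' exprSr.
    have h1 := hCV (d m); have h2 := nk_ge0 nu; have h3 := dn_ge0 k.
    move: IH h1 h2 h3 CV0; move: (q ^+ m) => Q; rewrite /q.
    move: (nk nu) (dn (K0 (d m))) (dn (d m)) (dn k) => a b e dk IH h1 h2 h3 C0.
    have h4 : 0 <= a * CV by rewrite mulr_ge0 // ltW.
    nra.
  have Wy m : W (y m.+1) = nu *: y m by rewrite yS WD Wk add0r WZ WV.
  have ky m : y m.+1 - K0 (W (y m.+1)) = k by rewrite Wy K0Z {1}yS addrK.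
  pose xn := Kk (y n.+1).
  have Mx : M xn := KM _.
  have Jx : J xn = y n.+1 := JK _.
  have sh : shift_op T mu xn = (c * nu) *: (Kk (y n) - xn).
    have := UK xn Mx; rewrite /shift_op Jx Wy scalerA KZ => e.
    by rewrite scalerBr -e cnu scalerBl opprB addrA subrK.
  have dnN v : dn (- v) = dn v by rewrite /dn normrN.
  have hx : dn xn <= CS * (nk (c * nu) * (CK * dn (d n))).
    have e1 : dn xn = dn (S (shift_op T mu xn)) by rewrite SL.
    rewrite e1; apply: (le_trans (hCS _)); rewrite ler_pM2l // sh dnZ'.
    apply: ler_wpM2l; first exact: nk_ge0.
    rewrite /xn -KB dnB; exact: hCK.
  have hk : dn k <= (1 + CV * CJ0) * (CJ * dn xn).
    rewrite -{1}(ky n).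
    apply: (le_trans (dnD _ _)); rewrite dnN.
    have h1 := hCV (W (y n.+1)); have h2 := Wb (y n.+1).
    have h3 : dn (y n.+1) <= CJ * dn xn by rewrite -Jx; exact: hCJ.
    have h4 := dn_ge0 (y n.+1); have h5 := dn_ge0 (W (y n.+1)).
    move: h1 h2 h3 h4 h5 CV0 CJ00.
    move: (dn (K0 (W (y n.+1)))) (dn (W (y n.+1))) (dn (y n.+1)) (CJ * dn xn) => a b e f.
    move=> h1 h2 h3 h4 h5 c1 c2.
    have h6 : CV * b <= CV * (CJ0 * e) by rewrite ler_pM2l.
    have h7 : 0 <= CV * CJ0 by rewrite mulr_ge0 // ltW.
    nra.
  have kpos : 0 < dn k.
    rewrite lt0r dn_ge0 andbT; apply/negP => /eqP /dn_eq0 /eqP.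
    by rewrite (negbTE k0).
  have hdn := dB n.
  have ncn := nk_ge0 (c * nu).
  have hxn := dn_ge0 xn.
  have hdd := dn_ge0 (d n).
  have qn : 0 <= q ^+ n by exact: exprn_ge0.
  have A0 : 0 <= 1 + CV * CJ0 by rewrite addr_ge0 // mulr_ge0 // ltW.
  have s1 : dn k <= (1 + CV * CJ0) * (CJ * (CS * (nk (c * nu) * (CK * dn (d n))))).
    apply: (le_trans hk); apply: ler_wpM2l => //; rewrite ler_pM2l //.
  have s2 : dn k <= B * dn (d n).
    by move: s1; rewrite /B !mulrA.
  have s3 : B * dn (d n) <= B * (q ^+ n * dn k) by apply: ler_wpM2l.
  move: s2 s3 hn kpos qn B0; move: B (q ^+ n) (dn k) (dn (d n)) => b t a e.
  nra.
exfalso.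
have [M1 [c1 [[_ [M10 _]] [_ [c10 [J1 [K1 [J1D [J1Z [_ [[[K1D K1Z] _] [K1M [KJ1 [JK1 UK1]]]]]]]]]]]]]] := hU _ bid.
have := UK1 _ (K1M y0); rewrite JK1 K1Z U0 // => /eqP; rewrite eq_sym scaler_eq0 (negbTE c10) /=.
move=> /eqP h; have := JK1 y0; rewrite h.
have -> : J1 0 = 0 by have := J1Z 0 0 M10; rewrite !scale0r.
by move=> e; move: y00; rewrite -e eqxx.
Qed.

End IP.

Lemma nbhs_of_ball (R : realType) (S : set (Cplx R)) (lam : Cplx R) (r : Cplx R) :
  0 < r -> (forall mu, `|lam - mu| < r -> S mu) -> interior S lam.
Proof.
move=> r0 hr; change (nbhs lam S); apply/nbhs_ballP.
exists r => // mu; rewrite -ball_normE /= => h; exact: hr.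
Qed.

Theorem corollary2p4 (R : realType) (H : completeNormedModType (Cplx R))
  (ip : H -> H -> Cplx R) :
  is_inner_product ip -> separable_space H -> infinite_dimensional H ->
  forall T : H -> H, bounded_op T ->
    (forall lam : Cplx R, boundary (spectrum T) lam -> ~ universal (shift_op T lam)) /\
    (spectrum T = boundary (spectrum T) ->
       forall lam : Cplx R, ~ universal (shift_op T lam)).
Proof.
move=> hip _ hinf T bT; split.
- move=> lam [_ nint] hU.
  have [r r0 hr] := univ_spec hip hinf bT hU.
  by apply: nint; apply: nbhs_of_ball r0 hr.
- move=> hb lam hU.
  have [r r0 hr] := univ_spec hip hinf bT hU.
  have sl : spectrum T lam by apply: hr; rewrite subrr normr0.
  rewrite hb in sl; case: sl => _ nint.
  by apply: nint; apply: nbhs_of_ball r0 hr.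
Qed.
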